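(* Let $G(n)=\sum_{k=0}^n(-1)^k\binom nk \binom{2k}{k+1}\binom{2n-2k}{n-k}$ for integers $n\ge 0$. Then $(n+1)^2G(n)=16n^2G(n-2)$ for all $n\ge 2$, and consequently for all $n\ge 0$, $$G(2n+1)=-\binom{2n+1}{n}^2,\qquad G(2n)=0.$$
   Context: Binomial coefficients $\binom{m}{j}$ are zero when $j>m$. *)

(* Defs.v *)
From HB Require Import structures.
From mathcomp Require Import all_boot all_order all_algebra.
Set Implicit Arguments. Unset Strict Implicit. Unset Printing Implicit Defensive.
Import Order.TTheory GRing.Theory Num.Theory.
Local Open Scope ring_scope.

Definition G (n : nat) : int :=
  \sum_(k < n.+1)
    (-1) ^+ k * ('C(n, k) * 'C(2 * k, k.+1) * 'C(2 * n - 2 * k, n - k))%:R.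

(* Main.v *)
Require Import Defs.
From HB Require Import structures.
From mathcomp Require Import all_boot all_order all_algebra.
From mathcomp Require Import ring zify.
Import GRing.Theory Num.Theory.
Local Open Scope ring_scope.

Lemma coefPC (p q : {poly int}) i j : ((p^:P * q%:P)`_i)`_j = p`_i * q`_j.
Proof. by rewrite coefMC coef_map /= coefCM. Qed.

Lemma coefX1 m i : ((('X + 1 : {poly int}) ^+ m)`_i) = ('C(m, i))%:R.
Proof.
rewrite addrC exprDn coef_sum.
under eq_bigr => j _ do rewrite expr1n mul1r coefMn coefXn.
case: (ltnP i m.+1) => him.
  rewrite (bigD1 (Ordinal him)) //= eqxx big1 ?addr0 //.
  move=> j /eqP hj; have -> : (i == j) = false.
    by apply/negbTE/eqP => e; apply: hj; apply: val_inj; rewrite /= e.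
  by rewrite mul0rn.
rewrite bin_small // big1 // => j _.
have -> : (i == j) = false by apply/negbTE; rewrite neq_ltn (leq_trans (ltn_ord j) him) orbT.
by rewrite mul0rn.
Qed.


Lemma expM2 (R : comRingType) (a b : R) m : (a * b^+2)^+m = a^+m * b^+(2 * m)%N.
Proof. by rewrite exprMn exprM. Qed.

Lemma keyid (x y : {poly {poly int}}) n :
  (y * (x+1)^+2 - x * (y+1)^+2)^+n = (x - y)^+n * (x*y - 1)^+n.
Proof. by rewrite -exprMn; congr (_ ^+ _); ring. Qed.

Lemma lhs_coef n : ((((('X%:P : {poly {poly int}}) * ('X+1)^+2 - 'X * ('X%:P+1)^+2)^+n)`_n)`_n.+1) = G n.
Proof.
rewrite exprBn coef_sum coef_sum /G; apply: eq_bigr => -[k hk'] _ /=.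
have hk : (k <= n)%N by rewrite -ltnS.
have -> : ((-1) ^+ k * ('X%:P * ('X + 1) ^+ 2) ^+ (n - k) * ('X * ('X%:P + 1) ^+ 2) ^+ k) *+ 'C(n, k)
   = ('X^k * ('X+1)^+(2*(n-k)) : {poly int})^:P * (((-1)^+k * ('C(n,k))%:R : int)%:P * ('X^(n-k) * ('X+1)^+(2*k)))%:P.
  rewrite !(rmorphM, rmorphXn, rmorphD, rmorphN, rmorph1, map_polyX) /= rmorph_nat.
  rewrite ?map_polyX -mulr_natr; rewrite !expM2; rewrite ?rmorph_nat; move: (n - k)%N (_%:R) => m c; ring.
rewrite (coefPC (_ : {poly int})) coefXnM ltnNge hk /= coefCM coefXnM.
rewrite ltnNge (leq_trans (leq_subr k n) (leqnSn n)) /= !coefX1.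

have -> : (n.+1 - (n - k) = k.+1)%N by rewrite subSn ?leq_subr // subKn.
have -> : (2 * n - 2 * k = 2 * (n - k))%N by rewrite mulnBr.
rewrite !natrM; move: (_%:R) (_%:R) (_%:R) => a b c; ring.
Qed.

Definition F (n i j : nat) : int :=
  ((n == n - i + (n - j))%N && (n.+1 == i + (n - j))%N)%:R * ((-1)^+(i+j) * ('C(n,i) * 'C(n,j))%:R).

Lemma rhs_coef n : (((('X : {poly {poly int}}) - 'X%:P)^+n * ('X * 'X%:P - 1)^+n)`_n)`_n.+1
  = \sum_(i < n.+1) \sum_(j < n.+1) F n i j.
Proof.
rewrite !exprBn mulr_suml coef_sum coef_sum; apply: eq_bigr => -[i hi] _ /=.
rewrite mulr_sumr coef_sum coef_sum; apply: eq_bigr => -[j hj] _ /=.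
have -> : ((-1) ^+ i * 'X ^+ (n - i) * 'X%:P ^+ i) *+ 'C(n, i) *
    (((-1) ^+ j * ('X * 'X%:P) ^+ (n - j) * 1 ^+ j) *+ 'C(n, j))
   = ('X^(n - i + (n - j)) : {poly int})^:P *
     ((((-1)^+(i+j) * ('C(n,i) * 'C(n,j))%:R : int))%:P * 'X^(i + (n-j)))%:P.
  rewrite !(rmorphM, rmorphXn, rmorphD, rmorphN, rmorph1, map_polyX) /= ?rmorph_nat.
  rewrite ?map_polyX mulrnAl mulrnAr -mulrnA -mulr_natr !exprD exprMn -[LHS]mulr_natr.
rewrite natrM; move: ('C(n,i)%:R) ('C(n,j)%:R) (n - i)%N (n - j)%N => a b p q; rewrite expr1n; ring.
rewrite (coefPC (_ : {poly int})) coefCM !coefXn /F.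
case: (n == _) => /=; case: (n.+1 == _) => /=; ring.
Qed.

Lemma dsum1 n (H : nat -> nat -> int) a b : (a < n.+1)%N -> (b < n.+1)%N ->
  (forall i j, (i < n.+1)%N -> (j < n.+1)%N -> ~~ ((i == a) && (j == b)) -> H i j = 0) ->
  \sum_(i < n.+1) \sum_(j < n.+1) H i j = H a b.
Proof.
move=> ha hb h0.
rewrite (bigD1 (Ordinal ha)) //= [X in _ + X]big1 ?addr0; last first.
  move=> i /eqP hia; apply: big1 => j _; apply: h0 => //.
  apply/negP => /andP[/eqP e _]; apply: hia; exact: val_inj.
rewrite (bigD1 (Ordinal hb)) //= [X in _ + X]big1 ?addr0 //.
move=> j /eqP hjb; apply: h0 => //; rewrite eqxx /=.
apply/eqP => e; apply: hjb; exact: val_inj.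
Qed.

Lemma G_coef n : G n = \sum_(i < n.+1) \sum_(j < n.+1) F n i j.
Proof. by rewrite -lhs_coef keyid rhs_coef. Qed.

Lemma G_odd m : G (2 * m).+1 = - ('C((2 * m).+1, m) ^ 2)%:R.
Proof.
have hz : forall i j, (i < (2 * m).+2)%N -> (j < (2 * m).+2)%N ->
    ~~ ((i == m.+1) && (j == m)) -> F (2 * m).+1 i j = 0.
  move=> i j hi hj hne; rewrite /F.
  case: andP => [[/eqP h1 /eqP h2]|]; last by rewrite mul0r.
  exfalso; move/negP: hne; apply; apply/andP; split; apply/eqP; lia.
have ha : (m.+1 < (2 * m).+2)%N by lia.
have hb : (m < (2 * m).+2)%N by lia.
rewrite G_coef (@dsum1 _ _ _ _ ha hb hz).
rewrite /F.
have -> : ((2 * m).+1 == (2 * m).+1 - m.+1 + ((2 * m).+1 - m))%N by apply/eqP; lia.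
have -> : ((2 * m).+2 == m.+1 + ((2 * m).+1 - m))%N by apply/eqP; lia.
have e : ((2 * m).+1 - m = m.+1)%N by lia.
have -> : 'C((2 * m).+1, m.+1) = 'C((2 * m).+1, m) by rewrite -e bin_sub //; lia.
have -> : (m.+1 + m = (2 * m).+1)%N by lia.
rewrite mulnn exprS exprM sqrrN expr1n mulr1 /=.
by rewrite mul1r mulN1r.
Qed.

Lemma G_even m : G (2 * m) = 0.
Proof.
rewrite G_coef big1 // => -[i hi] _; rewrite big1 // => -[j hj] _ /=; rewrite /F.
case: andP => [[/eqP h1 /eqP h2]|]; last by rewrite mul0r.
exfalso; lia.
Qed.

Lemma parity n : exists m, n = (2 * m)%N \/ n = (2 * m).+1.
Proof.
elim: n => [|n [m [->|->]]]; first by exists 0%N; left.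
- by exists m; right.
- by exists m.+1; left; lia.
Qed.

Lemma binkey p : ((p.+2) * 'C(2 * p + 3, p.+1) = 2 * (2 * p + 3) * 'C(2 * p + 1, p))%N.
Proof.
have h1 := mul_bin_diag (2 * p + 3) p.+1.
have h2 := mul_bin_diag (2 * p + 2) p.
have e1 : (2 * p + 3).-1 = (2 * p + 2)%N by lia.
have e2 : (2 * p + 2).-1 = (2 * p + 1)%N by lia.
rewrite e1 in h1; rewrite e2 in h2.
have e3 : 'C(2 * p + 3, p.+2) = 'C(2 * p + 3, p.+1).
  have -> : p.+2 = (2 * p + 3 - p.+1)%N by lia.
  by rewrite bin_sub //; lia.
rewrite e3 in h1.
apply/eqP; rewrite -(@eqn_pmul2l p.+1) //; apply/eqP.
rewrite -h1 mulnCA -h2.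
move: ('C(_, p)) => C; nia.
Qed.

Theorem mainTheorem4 :
  (forall n : nat, (2 <= n)%N ->
     (n.+1 ^ 2)%:R * G n = (16 * n ^ 2)%:R * G (n - 2)%N) /\
  (forall n : nat,
     G (2 * n).+1 = - ('C((2 * n).+1, n) ^ 2)%:R /\ G (2 * n) = 0).
Proof.
split; last by move=> n; rewrite G_odd G_even.
move=> n hn; have [m [e|e]] := parity n; subst n.
- have -> : (2 * m - 2 = 2 * (m - 1))%N by lia.
  by rewrite !G_even !mulr0.
- have [p ep] : exists p, m = p.+1 by exists m.-1; lia.
  subst m.
  have -> : ((2 * p.+1).+1 - 2 = (2 * p).+1)%N by lia.
  rewrite !G_odd !mulrN -!natrM; congr (- _%:R).
  have := binkey p.
  have -> : (2 * p + 3 = (2 * p.+1).+1)%N by lia.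
  have -> : (2 * p + 1 = (2 * p).+1)%N by lia.
  move: ('C(_, p.+1)) ('C(_, p)) => A B h.
  nia.
Qed.
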